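(* Let $R$ be a commutative associative ring with unit element, let $a,b\in R$, and let $m\ge 1$ be an integer. Let $T_{a,b}$ be the symmetric $2m\times 2m$ matrix over $R$ whose diagonal entries are $0$, whose entries in positions $(i,i+1)$ and $(i+1,i)$ ($1\le i\le 2m-1$) are equal to $a$, and all of whose other entries are equal to $b$. Then, with the convention $0^0=1$, $$\mathrm{Hf}(T_{a,b})=\sum_{k=0}^{m}(a-b)^{m-k}\,b^{k}\,\frac{(m+k)!}{k!\,(m-k)!\,2^{k}}.$$ (Here each coefficient $\frac{(m+k)!}{k!(m-k)!2^k}$ is a positive integer, acting on $R$ by repeated addition.)
   Context: For a symmetric matrix $A=(a_{ij})$ of order $n=2m$ over a commutative ring, the hafnian is $\mathrm{Hf}(A)=\sum a_{i_1i_2}a_{i_3i_4}\cdots a_{i_{n-1}i_n}$, where the sum runs over all partitions of $\{1,\dots,n\}$ into $m$ disjoint unordered pairs $\{i_1,i_2\},\dots,\{i_{n-1},i_n\}$ (each partition counted once, irrespective of the order of the pairs and of the elements within each pair). Diagonal entries do not enter the definition. The hafnian of the empty ($0\times 0$) matrix is $1$. *)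

(* Defs.v *)
From HB Require Import structures.
From mathcomp Require Import all_boot all_order all_algebra.
Set Implicit Arguments. Unset Strict Implicit. Unset Printing Implicit Defensive.
Import GRing.Theory.
Local Open Scope ring_scope.

Definition perfect_matching (n : nat) (P : {set {set 'I_n}}) : bool :=
  partition P [set: 'I_n] && [forall B in P, #|B| == 2%N].

(* Weight of a pair B = {i, j} with i < j : the entry A i j
   (the product below has exactly one factor when #|B| = 2). *)
Definition pair_weight (R : comPzRingType) (n : nat) (A : 'M[R]_n)
  (B : {set 'I_n}) : R :=
  \prod_(i in B) \prod_(j in B | (i < j)%N) A i j.

(* Diagonal entries never
   occur. For n = 0 the only matching is the empty one, giving 1. *)
Definition hafnian (R : comPzRingType) (n : nat) (A : 'M[R]_n) : R :=
  \sum_(P : {set {set 'I_n}} | perfect_matching P)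
     \prod_(B in P) pair_weight A B.

Definition Tab (R : comPzRingType) (n : nat) (a b : R) : 'M[R]_n :=
  \matrix_(i < n, j < n)
     if i == j then 0
     else if ((i.+1 == j) || (j.+1 == i))%N then a else b.

(* Main.v *)
Require Import Defs.
From HB Require Import structures.
From mathcomp Require Import all_boot all_order all_algebra.
Import GRing.Theory.
Local Open Scope ring_scope.
From mathcomp Require Import ring zify.
Set Implicit Arguments. Unset Strict Implicit. Unset Printing Implicit Defensive.


Section Key.
Variables (T : finType) (R : comPzRingType) (f : {set T} -> R).

Definition pm (S : {set T}) (P : {set {set T}}) : bool :=
  partition P S && [forall B in P, #|B| == 2%N].

Definition hs (S : {set T}) : R := \sum_(P | pm S P) \prod_(B in P) f B.

Lemma hs0 : hs set0 = 1.
Proof.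
rewrite /hs (bigD1 set0) /=; last first.
  by rewrite /pm partition_set0 eqxx /=; apply/forall_inP=> B; rewrite inE.
rewrite big_set0 big1 ?addr0 // => P /andP[/andP[]]; rewrite partition_set0.
by move=> -> _ /eqP.
Qed.

Lemma pm_block S P x : pm S P -> x \in S ->
  exists2 y, y \in S :\ x & pblock P x = [set x; y].
Proof.
case/andP=> pP /forall_inP c2 xS.
have xc : x \in cover P by rewrite (cover_partition pP).
have Bp := pblock_mem xc.
have xB : x \in pblock P x by rewrite mem_pblock.
have /cards2P[u [v [uv Be]]] := c2 _ Bp.
have Bsub := partitionS pP Bp.
move: xB; rewrite Be !inE => /orP[]/eqP xe.
  exists v.
    rewrite !inE xe eq_sym uv /=; apply: (subsetP Bsub); rewrite Be !inE eqxx orbT //.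
  by rewrite xe.
exists u.
  rewrite !inE xe uv /=; apply: (subsetP Bsub); rewrite Be !inE eqxx //.
by rewrite xe setUC.
Qed.

Lemma key (S : {set T}) x : x \in S ->
  hs S = \sum_(y in S :\ x) f [set x; y] * hs (S :\: [set x; y]).
Proof.
move=> xS.
have -> : hs S = \sum_(P | pm S P) \sum_(y in S :\ x)
    (if pblock P x == [set x; y] then \prod_(B in P) f B else 0).
  apply: eq_bigr => P pP; have [y yS Py] := pm_block pP xS.
  rewrite (bigD1 y) //= Py eqxx [X in _ + X]big1 ?addr0 // => z /andP[zS zy].
  case: eqP => // /setP/(_ z); rewrite !inE eqxx orbT => /orP[] /eqP ze.
    by move: zS; rewrite ze !inE eqxx.
  by rewrite ze eqxx in zy.
rewrite exchange_big /=; apply: eq_bigr => y yS.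
rewrite -big_mkcondr /=.
have xy : x != y by move: yS; rewrite !inE eq_sym => /andP[].
have yS' : y \in S by move: yS; rewrite !inE => /andP[].
rewrite /hs mulr_sumr.
rewrite (reindex_onto (fun P' => [set x; y] |: P') (fun P => P :\ [set x; y])) /=.
  set B0 := [set x; y].
  have xB0 : x \in B0 by rewrite !inE eqxx.
  have B0S : B0 \subset S by apply/subsetP=> z; rewrite !inE => /orP[]/eqP->.
  apply: eq_big => P'.
    apply/idP/idP.
      case/andP=> /andP[/andP[pP c2] _] /eqP e; rewrite -e /pm.
      rewrite partitionD1 //= ?setU11 //.
      by apply/forall_inP=> B /setD1P[_ BP]; exact: (forall_inP c2).
    case/andP=> pP c2.
    have xnc : x \notin cover P' by rewrite (cover_partition pP) in_setD xB0.
    have nB0 : B0 \notin P'.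
      by apply: contra xnc => h; apply/bigcupP; exists B0.
    have pU : partition (B0 |: P') S.
      have -> : S = B0 :|: (S :\: B0).
        by apply/setP=> z; rewrite in_setU in_setD; case: (boolP (z \in B0)) => //= /(subsetP B0S) ->.
      apply: partitionU1 => //; first by apply/set0Pn; exists x.
      by rewrite -setI_eq0; apply/eqP/setP=> z; rewrite in_setI in_setD in_set0; case: (z \in B0).
    rewrite /pm pU /= setU1K // eqxx andbT.
    rewrite (@def_pblock _ _ B0 x (partition_trivIset pU)) ?setU11 ?eqxx // andbT.
    apply/forall_inP=> B /setU1P[->|BP]; first by rewrite cards2 xy.
    exact: (forall_inP c2).
  move=> /andP[/andP[/andP[pP _] _] /eqP e].
  rewrite big_setU1 //=.
  apply/negP=> h; have : B0 \in (B0 |: P') :\ B0 by rewrite e.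
  by rewrite !inE eqxx.
move=> P /andP[pP /eqP Px].
rewrite setD1K // -Px pblock_mem // (cover_partition (proj1 (andP pP))) //.
Qed.
End Key.


Section Main.
Variables (R : comPzRingType) (a b : R) (N : nat).

Definition wt (n : nat) : 'M[R]_N := \matrix_(i, j)
  if [&& (i < n)%N, (j < n)%N & ((i.+1 == j) || (j.+1 == i))] then a else b.

Definition H n S := hs (pair_weight (wt n)) S.

Lemma pw2 (A : 'M[R]_N) x y : x != y ->
  pair_weight A [set x; y] = if (x < y)%N then A x y else A y x.
Proof.
move=> xy; rewrite /pair_weight big_setU1 ?inE //= big_set1.
rewrite !big_mkcondr !big_setU1 ?inE //= !big_set1 !ltnn.
case: ltngtP => h; rewrite ?mulr1 ?mul1r //.
by move/val_inj: h => h; rewrite h eqxx in xy.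
Qed.

Lemma wt_sym n x y : wt n x y = wt n y x.
Proof. by rewrite !mxE andbCA orbC. Qed.

Lemma pwt n x y : x != y -> pair_weight (wt n) [set x; y] = wt n x y.
Proof. by move=> xy; rewrite pw2 //; case: ifP => // _; rewrite wt_sym. Qed.

Lemma hs_loc (A A' : 'M[R]_N) (S : {set 'I_N}) :
  (forall i j : 'I_N, i \in S -> j \in S -> (i < j)%N -> A i j = A' i j) ->
  hs (pair_weight A) S = hs (pair_weight A') S.
Proof.
move=> h; apply: eq_bigr => P /andP[pP _]; apply: eq_bigr => B BP.
have BS := partitionS pP BP.
apply: eq_bigr => i iB; apply: eq_bigr => j /andP[jB ij].
by apply: h => //; apply: (subsetP BS).
Qed.

Lemma H_loc n n' (S : {set 'I_N}) : (forall i : 'I_N, i \in S -> (i < n)%N = (i < n')%N) -> H n S = H n' S.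
Proof.
move=> h; apply: hs_loc => i j iS jS _; rewrite !mxE h // (h j) //.
Qed.

Fixpoint D (t : nat) : R :=
  match t with 0 => 1 | 1 => 0 | t'.+2 => (b * D t') *+ t'.+1 end.

Lemma card_D2 (E : {set 'I_N}) x y : x \in E -> y \in E :\ x ->
  #|E :\: [set x; y]| = (#|E| - 2)%N.
Proof.
move=> xE yE.
have -> : E :\: [set x; y] = (E :\ x) :\ y.
  by apply/setP=> z; rewrite !inE negb_or; case: (z == x); case: (z == y).
rewrite (cardsD1 x E) xE (cardsD1 y (E :\ x)) yE.
by rewrite add1n add1n subSS subSS subn0.
Qed.

Lemma H0 t : forall E : {set 'I_N}, #|E| = t -> H 0 E = D t.
Proof.
elim/ltn_ind: t => t IH E hE.
case: t IH hE => [|s] IH hE.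
  by move/eqP: hE; rewrite cards_eq0 => /eqP ->; rewrite /H hs0.
have /set0Pn[x xE] : E != set0 by rewrite -cards_eq0 hE.
rewrite /H (key _ xE).
have cEx : #|E :\ x| = s by move: hE; rewrite (cardsD1 x E) xE add1n => -[].
rewrite (eq_bigr (fun _ => b * D s.-1)); last first.
  move=> y yE; have xy : x != y by move: yE; rewrite !inE eq_sym => /andP[].
  have cD : #|E :\: [set x; y]| = s.-1.
    by rewrite (card_D2 xE yE) hE; case: s {IH hE cEx yE} => // s; rewrite subSS subn1.
  have := IH s.-1 _ _ cD; rewrite /H => ->; last by case: s {IH hE cEx yE cD}.
  by rewrite pwt // mxE /=.
rewrite sumr_const cEx; case: s {IH hE cEx} => //=.
Qed.

Fixpoint g (n F : nat) : R :=
  match n with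
  | 0 => D F
  | k.+1 => g k F.+1 + (a - b) * (if k is k'.+1 then g k' F else 0)
  end.

Definition Pn n := (n <= N)%N -> forall E : {set 'I_N},
  (forall e : 'I_N, e \in E -> (n <= e)%N) ->
  H n ([set i : 'I_N | (i < n)%N] :|: E) = g n #|E|.

Lemma Hstep k : Pn k -> (if k is k'.+1 then Pn k' else True) -> Pn k.+1.
Proof.
move=> IH1 IH2 kN E hE.
set S := [set i : 'I_N | (i < k.+1)%N] :|: E.
pose x : 'I_N := Ordinal kN.
have xS : x \in S by rewrite !inE ltnSn.
have xE : x \notin E by apply/negP => /hE; rewrite ltnn.
have eS : S = [set i : 'I_N | (i < k)%N] :|: (x |: E).
  apply/setP=> i; rewrite !inE ltnS leq_eqVlt -val_eqE /=.
  by case: (i == k :> nat); case: (i < k)%N.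
have step1 : H k S = g k.+1 #|E| - (a - b) * (if k is k'.+1 then g k' #|E| else 0).
  rewrite /= eS IH1 ?cardsU1 ?xE ?add1n ?addrK //; first exact: ltnW.
  by move=> e; rewrite !inE => /orP[/eqP->//|/hE/ltnW].
have loc y : y \in S :\ x -> H k.+1 (S :\: [set x; y]) = H k (S :\: [set x; y]).
  move=> _; apply: H_loc => i; rewrite !inE negb_or => /andP[/andP[ix _] _].
  by move: ix; rewrite ltnS leq_eqVlt -val_eqE /= => /negbTE ->.
rewrite /H (key _ xS).
rewrite (eq_bigr (fun y : 'I_N => (b + (a - b) * (y.+1 == k)%N%:R) * H k (S :\: [set x; y]))); last first.
  move=> y yS; have xy : x != y by move: yS; rewrite !inE eq_sym => /andP[].
  rewrite pwt // mxE /= ltnSn -/(H _ _) loc //; congr (_ * _).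
  have [h|h] := eqVneq (y.+1) k.
    by rewrite h orbT leqnSn /= mulr1 addrC subrK.
  rewrite orbF mulr0 addr0; case: ltnP => //= h2.
  by rewrite (gtn_eqF h2).
have hk : \sum_(y in S :\ x) b * H k (S :\: [set x; y]) = H k S.
  rewrite [RHS]/H (key _ xS); apply: eq_bigr => y yS.
  have xy : x != y by move: yS; rewrite !inE eq_sym => /andP[].
  by rewrite pwt // mxE /= ltnn.
rewrite (eq_bigr (fun y : 'I_N => b * H k (S :\: [set x; y]) +
   (a - b) * ((y.+1 == k)%N%:R * H k (S :\: [set x; y])))); last first.
  by move=> y _; rewrite mulrDl mulrA.
rewrite big_split /= hk -mulr_sumr step1.
suff -> : \sum_(i in S :\ x) (i.+1 == k)%N%:R * H k (S :\: [set x; i]) =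
   (if k is k'.+1 then g k' #|E| else 0) by rewrite subrK.
clear step1 hk loc; move: IH1 IH2 kN hE @S @x xS xE eS.
case: k => [|k] IH1 IH2 kN hE S x xS xE eS.
  by rewrite big1 // => y _; rewrite mul0r.
have kN' : (k < N)%N := ltn_trans (ltnSn k) kN.
pose y0 : 'I_N := Ordinal kN'.
have y0S : y0 \in S :\ x.
  by rewrite !inE -val_eqE /= (ltn_eqF (ltnSn k)) ltnS leqnSn.
rewrite (bigD1 y0) //= (_ : (y0.+1 == k.+1)%N = true) ?eqxx // mul1r big1 ?addr0; last first.
  move=> y /andP[_ yy0]; case: eqP => h; last by rewrite mul0r.
  by case: h => hk; exfalso; move/negP: yy0; apply; apply/eqP; apply: val_inj; exact: hk.
have eS2 : S :\: [set x; y0] = [set i : 'I_N | (i < k)%N] :|: E.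
  apply/setP=> i; rewrite !inE -!val_eqE /=.
  case: (boolP (i \in E)) => iE; last by rewrite !orbF; case: (ltngtP i k) => // h; lia.
  have := hE _ iE; rewrite !orbT !andbT => h; apply/negP; lia.
rewrite eS2 -IH2 ?eS2 //.
- apply: H_loc => i; rewrite inE => /orP[|/hE].
    by rewrite inE => ik; rewrite ik ltnS (ltnW ik).
  by move=> ki; apply/idP/idP => h; lia.
- exact: ltnW.
- by move=> e /hE /ltnW /ltnW.
Qed.


Lemma P0 : Pn 0.
Proof.
move=> _ E _.
have -> : [set i : 'I_N | (i < 0)%N] :|: E = E by apply/setP=> i; rewrite !inE ltn0.
exact: H0.
Qed.

Lemma Hall n : Pn n.
Proof.
suff : Pn n /\ Pn n.+1 by case.
elim: n => [|n [IH1 IH2]]; first by split; [exact: P0 | exact: Hstep P0 I].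
by split => //; apply: Hstep.
Qed.

Definition Tm n F s := (D (n + F - s.*2) * (a - b) ^+ s) *+ 'C(n - s, s).

Lemma binP n s : 'C(n.+1 - s, s.+1) = ('C(n - s, s.+1) + 'C(n - s, s))%N.
Proof.
case: (leqP s n) => h; first by rewrite subSn.
have e1 : (n.+1 - s = 0)%N by apply/eqP; rewrite subn_eq0.
have e2 : (n - s = 0)%N by apply/eqP; rewrite subn_eq0 ltnW.
rewrite e1 e2 !bin0n; case: s h {e1 e2} => //.
Qed.

Lemma Tm_last n F : Tm n F n.+1 = 0.
Proof.
have e : (n - n.+1 = 0)%N by apply/eqP; rewrite subn_eq0.
by rewrite /Tm e bin0n mulr0n.
Qed.

Lemma Tm_step n F (i : nat) :
  Tm n.+2 F i.+1 = Tm n.+1 F.+1 i.+1 + (a - b) * Tm n F i.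
Proof.
have e1 : (n.+2 + F - i.+1.*2 = n.+1 + F.+1 - i.+1.*2)%N. rewrite addSnnS. reflexivity.
have e2 : (n.+2 + F - i.+1.*2 = n + F - i.*2)%N.
  rewrite doubleS !addSn !subSS. reflexivity.
rewrite /Tm subSS binP.
rewrite mulrnDr. congr (_ + _). rewrite e1. reflexivity. rewrite e2 exprS mulrnAr mulrCA. reflexivity.
Qed.

Lemma Tm_zero n F s : (n - s < s)%N -> Tm n F s = 0.
Proof. by move=> h; rewrite /Tm bin_small // mulr0n. Qed.

Lemma gclosed n F0 : g n F0 = \sum_(s < n.+1) Tm n F0 s.
Proof.
suff : forall F, g n F = \sum_(s < n.+1) Tm n F s /\ g n.+1 F = \sum_(s < n.+2) Tm n.+1 F s.
  move/(_ F0) => []; exact.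
elim: n => [|n IH] F.
  split.
    rewrite big_ord_recl big_ord0 /Tm double0 subn0 add0n expr0 mulr1 bin0 mulr1n addr0.
    reflexivity.
  change (g 1 F) with (D F.+1 + (a - b) * 0).
  rewrite 2!big_ord_recl big_ord0 (@Tm_zero 1 F 1) // mulr0 !addr0.
  rewrite /Tm double0 subn0 expr0 mulr1 bin0 mulr1n add1n.
  reflexivity.
split; first exact: (proj2 (IH F)).
change (g n.+2 F) with (g n.+1 F.+1 + (a - b) * g n F).
rewrite (proj2 (IH F.+1)) (proj1 (IH F)).
rewrite [RHS]big_ord_recl [in LHS]big_ord_recl -addrA.
congr (_ + _).
  rewrite /Tm -addSnnS. reflexivity.
rewrite (eq_bigr (fun i : 'I_n.+2 => Tm n.+1 F.+1 (bump 0 i) + (a - b) * Tm n F i)); last first.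
  move=> i _; rewrite /bump /= Tm_step. reflexivity.
rewrite big_split /= -mulr_sumr [X in _ = X + _]big_ord_recr [X in _ = _ + _ * X]big_ord_recr /=.
rewrite /bump /= Tm_last addr0 [X in _ = _ + X + _]Tm_zero ?addr0; first reflexivity.
rewrite add1n; exact: leq_ltn_trans (leq_subr _ _) (ltnSn _).
Qed.

End Main.


Definition odf j := (\prod_(i < j) (i.*2).+1)%N.

Lemma D2 (R : comPzRingType) (b : R) j : D b j.*2 = b ^+ j *+ odf j.
Proof.
elim: j => [|j IH]; first by rewrite /odf big_ord0 expr0.
rewrite doubleS; change (D b (j.*2).+2) with ((b * D b j.*2) *+ (j.*2).+1).
by rewrite IH /odf big_ord_recr /= mulrnAr -mulrnA exprS.
Qed.

Lemma fact2 k : ((k.*2)`! = k`! * 2 ^ k * odf k)%N.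
Proof.
elim: k => [|k IH]; first by rewrite /odf big_ord0.
rewrite doubleS !factS IH /odf big_ord_recr /= expnS.
rewrite -!muln2; ring.
Qed.


Lemma coef m k : (k <= m)%N ->
  ((m + k)`! %/ (k`! * (m - k)`! * 2 ^ k) = 'C(m + k, m - k) * odf k)%N.
Proof.
move=> km.
have e : (m + k - (m - k) = k.*2)%N by lia.
rewrite -(bin_fact (_ : m - k <= m + k)%N); last by lia.
rewrite e fact2.
rewrite (_ : ('C(m + k, m - k) * ((m - k)`! * (k`! * 2 ^ k * odf k)))%N =
   ('C(m + k, m - k) * odf k) * (k`! * (m - k)`! * 2 ^ k))%N; last by ring.
by rewrite mulnK // !muln_gt0 !fact_gt0 expn_gt0.
Qed.

Unset Implicit Arguments.

Theorem mainTheorem1 (R : comPzRingType) (a b : R) (m : nat) (hm : (1 <= m)%N) :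
  hafnian (Tab (m.*2) a b) =
  \sum_(k < m.+1)
     ((a - b) ^+ (m - k) * b ^+ k)
       *+ ((m + k)`! %/ (k`! * (m - k)`! * 2 ^ k)).
Proof.
set N := m.*2.
have e1 : hafnian (Tab N a b) = @H _ a b N N ([set i : 'I_N | (i < N)%N] :|: set0).
  rewrite (_ : [set i : 'I_N | (i < N)%N] :|: set0 = setT); last first.
    by apply/setP=> i; rewrite !inE ltn_ord.
  change (hs (pair_weight (Tab N a b)) setT = hs (pair_weight (wt a b N N)) setT).
  apply: hs_loc => i j _ _ h.
  by rewrite !mxE -val_eqE /= (ltn_eqF h) !ltn_ord.
rewrite e1 (@Hall _ a b N N (leqnn N)); last by move=> e; rewrite inE.
rewrite cards0 gclosed.
have -> : \sum_(s < N.+1) Tm a b N 0 s = \sum_(s < m.+1) Tm a b N 0 s.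
  rewrite [RHS](big_ord_widen N.+1 (fun s => Tm a b N 0 s)); last by rewrite /N; lia.
  rewrite [LHS](bigID (fun s : 'I_ _ => (s < m.+1)%N)) /= [X in _ + X]big1 ?addr0 //.
  move=> s hs; apply: Tm_zero; move: hs; rewrite /N; lia.
rewrite (reindex_inj rev_ord_inj) /=; apply: eq_bigr => k _.
have km : (k <= m)%N by rewrite -ltnS ltn_ord.
rewrite subSS /Tm (_ : (N + 0 - (m - k).*2 = k.*2)%N); last by rewrite /N; lia.
rewrite (_ : (N - (m - k) = m + k)%N); last by rewrite /N; lia.
rewrite D2 coef // mulrnAl -mulrnA [in LHS]mulrC mulnC.
reflexivity.
Qed.
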